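(* Let $d\ge 1$, $T\ge 1$, let $\mathcal{X}\subseteq\mathbb{R}^d$ be a non-empty closed convex set containing $\mathbf{0}$, and let $0<\mu\le L$. Let $f_1,\dots,f_T:\mathcal{X}\to[0,\infty)$ be differentiable functions such that, for every $t$ and all $x,y\in\mathcal{X}$, $\frac{\mu}{2}\|y-x\|^2\le f_t(y)-f_t(x)-\langle\nabla f_t(x),y-x\rangle\le\frac{L}{2}\|y-x\|^2$, and such that there is a finite constant $G$ with $\max_{x\in\mathcal{X}}\|\nabla f_t(x)\|=G$ for all $t$. Let $x_0=\mathbf{0}$. Then the OMGD algorithm with $K=\lceil\frac{L+\mu}{2\mu}\ln4\rceil$ satisfies $$C_{\mathcal{A}_o}-C_{\mathsf{OPT}}\le 2G(\|x_1^\star\|+\mathcal{P}_T^\star)+5\|x_1^\star\|^2+\Big(10-\frac{\mu}{2(\mu+4)}\Big)\mathcal{P}_{2,T}^\star.$$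
   Context: $x_t^\star=\arg\min_{x\in\mathcal{X}}f_t(x)$, $\mathcal{P}_T^\star=\sum_{t=2}^T\|x_t^\star-x_{t-1}^\star\|$, $\mathcal{P}_{2,T}^\star=\sum_{t=2}^T\|x_t^\star-x_{t-1}^\star\|^2$. Quadratic-switching cost of $(y_1,\dots,y_T)\in\mathcal{X}^T$ with $y_0=x_0$: $\sum_{t=1}^T\big(f_t(y_t)+\frac12\|y_t-y_{t-1}\|^2\big)$; $C_{\mathsf{OPT}}$ is its minimum over $\mathcal{X}^T$. OMGD with parameter $K$: $x_1=x_0$; for $t=2,\dots,T$, $z_t^{(0)}=x_{t-1}$, $z_t^{(k)}=\Pi_{\mathcal{X}}\big(z_t^{(k-1)}-\frac1L\nabla f_{t-1}(z_t^{(k-1)})\big)$ ($k=1,\dots,K$), $x_t=z_t^{(K)}$, where $\Pi_{\mathcal{X}}$ is Euclidean projection onto $\mathcal{X}$. $C_{\mathcal{A}_o}$ is the quadratic-switching cost of $(x_1,\dots,x_T)$; $C_{\mathcal{A}_o}-C_{\mathsf{OPT}}$ is the dynamic regret. *)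

(* Defs.v *)
From HB Require Import structures.
From mathcomp Require Import all_boot all_order all_algebra.
From mathcomp Require Import all_classical all_reals all_analysis.
Set Implicit Arguments. Unset Strict Implicit. Unset Printing Implicit Defensive.
Import Order.TTheory GRing.Theory Num.Theory.
Import numFieldNormedType.Exports.
Local Open Scope classical_set_scope.
Local Open Scope ring_scope.

Section OMGD.
Variables (R : realType) (d : nat).
Notation vec := 'rV[R]_d.

(* Euclidean inner product and Euclidean norm on R^d
   (MathComp's built-in norm on matrices is the max-norm, so we define ours). *)
Definition dotp (u v : vec) : R := \sum_(i < d) u ord0 i * v ord0 i.
Definition enorm (u : vec) : R := Num.sqrt (dotp u u).

Definition convex_subset (X : set vec) : Prop :=
  forall x y (l : R), X x -> X y -> 0 <= l -> l <= 1 -> X (l *: x + (1 - l) *: y).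

Definition grad (f : vec -> R) (x : vec) : vec :=
  \row_(i < d) 'D_(delta_mx 0 i : vec) f x.

(* Euclidean projection onto X: the (unique, for X closed convex non-empty)
   point of X closest to z. *)
Definition proj (X : set vec) (z : vec) : vec :=
  xget 0 [set y | X y /\ forall w, X w -> enorm (y - z) <= enorm (w - z)].

(* Minimizer of f over X (unique for strongly convex f on closed convex X). *)
Definition argminX (X : set vec) (f : vec -> R) : vec :=
  xget 0 [set y | X y /\ forall w, X w -> f y <= f w].

Definition pgd_step (X : set vec) (L : R) (f : vec -> R) (z : vec) : vec :=
  proj X (z - L^-1 *: grad f z).

(* OMGD iterates: omgd 0 = x_0 = 0, omgd 1 = x_1 = x_0,
   omgd (t+1) = K projected gradient steps on f_t started from omgd t  (t >= 1). *)
Fixpoint omgd (X : set vec) (L : R) (K : nat) (f : nat -> vec -> R) (t : nat) : vec :=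
  match t with
  | 0 => 0
  | 1 => 0
  | (n.+1) as m => iter K (pgd_step X L (f n)) (omgd X L K f n)
  end.

Definition qs_cost (f : nat -> vec -> R) (T : nat) (y : nat -> vec) : R :=
  \sum_(1 <= t < T.+1) (f t (y t) + 2^-1 * enorm (y t - y t.-1) ^+ 2).

(* C_OPT: minimum of the cost over all (y_1..y_T) in X^T with y_0 = x_0 = 0
   (written as an infimum; the minimum is attained under the hypotheses). *)
Definition C_OPT (X : set vec) (f : nat -> vec -> R) (T : nat) : R :=
  inf [set c | exists y : nat -> vec,
         [/\ y 0 = 0, (forall t, (1 <= t <= T)%N -> X (y t)) & c = qs_cost f T y]].

Definition path_len (X : set vec) (f : nat -> vec -> R) (T : nat) : R :=
  \sum_(2 <= t < T.+1) enorm (argminX X (f t) - argminX X (f t.-1)).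
Definition path_len2 (X : set vec) (f : nat -> vec -> R) (T : nat) : R :=
  \sum_(2 <= t < T.+1) enorm (argminX X (f t) - argminX X (f t.-1)) ^+ 2.

End OMGD.

(* Main.v *)
Require Import Defs.
From HB Require Import structures.
From mathcomp Require Import all_boot all_order all_algebra.
From mathcomp Require Import all_classical all_reals all_analysis.
From mathcomp Require Import ring lra.
Import Order.TTheory GRing.Theory Num.Theory.
Import numFieldNormedType.Exports.
Local Open Scope classical_set_scope.
Local Open Scope ring_scope.
Set Implicit Arguments. Unset Strict Implicit. Unset Printing Implicit Defensive.

Section Dot.
Variables (R : realType) (d : nat).
Notation vec := 'rV[R]_d.
Implicit Types u v w : vec.

Lemma dotpC u v : dotp u v = dotp v u.
Proof. by rewrite /dotp; apply: eq_bigr => i _; rewrite mulrC. Qed.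
Lemma dotpDl u v w : dotp (u + v) w = dotp u w + dotp v w.
Proof. by rewrite /dotp -big_split; apply: eq_bigr => i _; rewrite mxE mulrDl. Qed.
Lemma dotpNl u v : dotp (- u) v = - dotp u v.
Proof. by rewrite /dotp -sumrN; apply: eq_bigr => i _; rewrite mxE mulNr. Qed.
Lemma dotpZl a u v : dotp (a *: u) v = a * dotp u v.
Proof. by rewrite /dotp mulr_sumr; apply: eq_bigr => i _; rewrite mxE mulrA. Qed.
Lemma dotpBl u v w : dotp (u - v) w = dotp u w - dotp v w.
Proof. by rewrite dotpDl dotpNl. Qed.
Lemma dotpDr u v w : dotp w (u + v) = dotp w u + dotp w v.
Proof. by rewrite dotpC dotpDl !(dotpC w). Qed.
Lemma dotpNr u v : dotp v (- u) = - dotp v u.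
Proof. by rewrite dotpC dotpNl dotpC. Qed.
Lemma dotpZr a u v : dotp v (a *: u) = a * dotp v u.
Proof. by rewrite dotpC dotpZl dotpC. Qed.
Lemma dotpBr u v w : dotp w (u - v) = dotp w u - dotp w v.
Proof. by rewrite dotpDr dotpNr. Qed.
Lemma dotp0l v : dotp 0 v = 0.
Proof. by rewrite /dotp big1 // => i _; rewrite mxE mul0r. Qed.
Lemma dotp0r v : dotp v 0 = 0.
Proof. by rewrite dotpC dotp0l. Qed.
Lemma dotp_ge0 u : 0 <= dotp u u.
Proof. by rewrite /dotp; apply: sumr_ge0 => i _; rewrite -expr2 sqr_ge0. Qed.
Lemma enorm_ge0 u : 0 <= enorm u.
Proof. exact: sqrtr_ge0. Qed.
Lemma enorm_sq u : enorm u ^+ 2 = dotp u u.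
Proof. by rewrite /enorm sqr_sqrtr // dotp_ge0. Qed.
Lemma coord_le u i : (u ord0 i) ^+ 2 <= dotp u u.
Proof.
rewrite /dotp (bigD1 i) //= -expr2 lerDl; apply: sumr_ge0 => j _.
by rewrite -expr2 sqr_ge0.
Qed.

Lemma dotp_comb x y u v : dotp (x *: u - y *: v) (x *: u - y *: v) =
  x ^+ 2 * dotp u u - 2 * x * y * dotp u v + y ^+ 2 * dotp v v.
Proof.
rewrite !dotpBl !dotpBr !dotpZl !dotpZr (dotpC v u); ring.
Qed.

Lemma dotp_addZ u v l : dotp (u + l *: v) (u + l *: v) =
  dotp u u + 2 * l * dotp u v + l ^+ 2 * dotp v v.
Proof. by rewrite !dotpDl !dotpDr !dotpZl !dotpZr (dotpC v u); ring. Qed.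

Lemma cs2 u v : dotp u v ^+ 2 <= dotp u u * dotp v v.
Proof.
have h1 := dotp_ge0 (dotp v v *: u - dotp u v *: v).
have h2 := dotp_ge0 (dotp u v *: u - dotp u u *: v).
have h3 := dotp_ge0 (1 *: u - 1 *: v).
have h4 := dotp_ge0 (1 *: u - (-1) *: v).
rewrite !dotp_comb in h1 h2 h3 h4.
have ha := dotp_ge0 u; have hc := dotp_ge0 v.
move: h1 h2 h3 h4 ha hc.
set a := dotp u u; set b := dotp u v; set c := dotp v v => h1 h2 h3 h4 ha hc.
have [c0|c0] := eqVneq c 0; last first.
  have cp : 0 < c by rewrite lt0r c0.
  have e : c ^+ 2 * a - 2 * c * b * b + b ^+ 2 * c = c * (a * c - b ^+ 2) by ring.
  rewrite e pmulr_rge0 // in h1; lra.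
have [a0|a0] := eqVneq a 0; last first.
  have ap : 0 < a by rewrite lt0r a0.
  have e : b ^+ 2 * a - 2 * b * a * b + a ^+ 2 * c = a * (a * c - b ^+ 2) by ring.
  rewrite e pmulr_rge0 // in h2; lra.
rewrite a0 c0 !expr1n !mul1r !mulr1 in h3 h4 *.
have b0 : b = 0 by lra.
by rewrite b0 expr2 !mulr0.
Qed.

Lemma cs u v : dotp u v <= enorm u * enorm v.
Proof.
have h := cs2 u v; rewrite -!enorm_sq in h.
have := enorm_ge0 u; have := enorm_ge0 v.
have [b0|b0] := lerP (dotp u v) 0.
  by move=> *; apply: le_trans b0 _; rewrite mulr_ge0.
move=> h1 h2.
rewrite -(ler_pXn2r (n:=2)) ?nnegrE ?mulr_ge0 ?exprMn //; lra.
Qed.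

Lemma enorm_tri u v : enorm (u + v) <= enorm u + enorm v.
Proof.
have h := cs u v.
rewrite -(ler_pXn2r (n:=2)) // ?nnegrE ?addr_ge0 ?enorm_ge0 //.
rewrite enorm_sq dotpDl !dotpDr (dotpC v u) -!enorm_sq; nra.
Qed.

Lemma enormN u : enorm (- u) = enorm u.
Proof. by rewrite /enorm dotpNl dotpNr opprK. Qed.

Lemma enormB u v : enorm (u - v) = enorm (v - u).
Proof. by rewrite -enormN opprB. Qed.

Lemma coord_le_enorm u i : `|u ord0 i| <= enorm u.
Proof.
rewrite -(ler_pXn2r (n:=2)) // ?nnegrE ?enorm_ge0 //.
by rewrite real_normK ?num_real // enorm_sq coord_le.
Qed.
End Dot.

Section Anal.
Variables (R : realType) (d : nat).
Notation vec := 'rV[R]_d.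

Lemma sum_cont (r : seq 'I_d) (F : 'I_d -> vec -> R) :
  (forall i, continuous (F i)) -> continuous (fun y => \sum_(i <- r) F i y).
Proof.
move=> hF; elim: r => [|i r IH].
  under eq_fun do rewrite big_nil; exact: cst_continuous.
under eq_fun do rewrite big_cons.
by move=> y; apply: continuousD; [exact: hF| exact: IH].
Qed.

Lemma dist2_cont (z : vec) : continuous (fun y : vec => dotp (y - z) (y - z)).
Proof.
rewrite /dotp; apply: sum_cont => i y.
have hc : {for y, continuous (fun y : vec => (y - z) ord0 i)}.
  apply: (@continuous_comp _ _ _ (fun y : vec => y - z) (fun M : vec => M ord0 i)).
    by apply: continuousB; [by move=> ? | exact: cst_continuous].
  exact: coord_continuous.
exact: (continuousM hc hc).
Qed.

Lemma bounded_of (X : set vec) B : (forall x, X x -> enorm x <= B) -> bounded_set X.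
Proof.
move=> hB; exists B; split; first exact: num_real.
move=> M hM y Xy /=.
change (mx_norm y <= M); rewrite mx_normrE; apply: bigmax_le => [|ij _]; first by apply: ltW; apply: le_lt_trans hM; apply: le_trans (hB _ Xy); exact: enorm_ge0.
apply: ltW; apply: le_lt_trans hM; apply: le_trans (hB _ Xy).
by case: ij => a b /=; rewrite (ord1 a); exact: coord_le_enorm.
Qed.

Lemma exists_min (X : set vec) (phi : vec -> R) : X !=set0 -> compact X ->
  {within X, continuous phi} -> exists2 c, X c & forall w, X w -> phi c <= phi w.
Proof.
move=> X0 cX cf; have [c cX' h] := EVT_min_rV X0 cX cf.
exists c; first by rewrite inE in cX'.
by move=> w Xw; apply: h; rewrite inE.
Qed.

End Anal.

Section Opt.
Variables (R : realType) (d : nat).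
Notation vec := 'rV[R]_d.

Definition is_proj (X : set vec) (z p : vec) := X p /\ forall w, X w -> enorm (p - z) <= enorm (w - z).
Definition is_min (X : set vec) (f : vec -> R) (c : vec) := X c /\ forall w, X w -> f c <= f w.

Lemma enorm_le_sq (u v : vec) : enorm u <= enorm v -> dotp u u <= dotp v v.
Proof.
by move=> h; rewrite -!enorm_sq; rewrite ler_pXn2r // ?nnegrE ?enorm_ge0.
Qed.

Lemma proj_vi (X : set vec) (z p w : vec) : convex_subset X -> is_proj X z p -> X w ->
  dotp (z - p) (w - p) <= 0.
Proof.
move=> hc [Xp hp] Xw; rewrite leNgt; apply/negP => hs.
have hD := dotp_ge0 (w - p).
move: hs hD; set s := dotp (z - p) (w - p); set D := dotp (w - p) (w - p) => hs hD.
have sD : 0 < s + D by lra.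
set l := s / (s + D).
have l0 : 0 < l by rewrite divr_gt0.
have l1 : l <= 1 by rewrite ler_pdivrMr // mul1r; lra.
have hl : l * (s + D) = s by rewrite /l mulfVK // gt_eqF.
have Xq := hc w p l Xw Xp (ltW l0) l1.
have := enorm_le_sq (hp _ Xq).
have -> : l *: w + (1 - l) *: p - z = (p - z) + l *: (w - p).
  by apply/rowP => i; rewrite !mxE; ring.
rewrite dotp_addZ -/D.
have -> : dotp (p - z) (w - p) = - s by rewrite /s -dotpNl opprB.
move=> h.
have : 0 <= l * (- 2 * s + l * D) by nra.
nra.
Qed.

Lemma opt_vi (X : set vec) (f : vec -> R) (g c : vec) L (w : vec) : convex_subset X -> is_min X f c ->
  0 <= L ->
  (forall y, X y -> f y - f c - dotp g (y - c) <= L / 2 * enorm (y - c) ^+ 2) ->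
  X w -> 0 <= dotp g (w - c).
Proof.
move=> hc [Xc hm] L0 hup Xw; rewrite leNgt; apply/negP => hs.
have hD := dotp_ge0 (w - c).
move: hs hD; set s := dotp g (w - c); set D := dotp (w - c) (w - c) => hs hD.
have LD : 0 <= L * D by rewrite mulr_ge0.
have sD : 0 < - s + L * D by lra.
set l := - s / (- s + L * D).
have l0 : 0 < l by rewrite divr_gt0 // oppr_gt0.
have l1 : l <= 1 by rewrite ler_pdivrMr // mul1r; lra.
have hl : l * (- s + L * D) = - s by rewrite /l mulfVK // gt_eqF.
have Xq := hc w c l Xw Xc (ltW l0) l1.
have := hup _ Xq; have := hm _ Xq.
have -> : l *: w + (1 - l) *: c - c = l *: (w - c).
  by apply/rowP => i; rewrite !mxE; ring.
rewrite enorm_sq !dotpZr !dotpZl -/D -/s => h1 h2.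
have : 0 <= l * s + L / 2 * (l * (l * D)) by lra.
nra.
Qed.


Lemma pgd_contract (X : set vec) (f : vec -> R) mu L (x c p : vec) :
  convex_subset X -> 0 < mu -> mu <= L ->
  (forall x y, X x -> X y ->
     mu / 2 * enorm (y - x) ^+ 2 <= f y - f x - dotp (grad f x) (y - x)
     /\ f y - f x - dotp (grad f x) (y - x) <= L / 2 * enorm (y - x) ^+ 2) ->
  is_min X f c -> X x -> is_proj X (x - L^-1 *: grad f x) p ->
  (L + mu) * dotp (p - c) (p - c) <= (L - mu) * dotp (x - c) (x - c).
Proof.
move=> hconv mu0 muL hS hmin Xx hp.
have L0 : 0 < L by apply: lt_le_trans muL.
have Xp := hp.1; have Xc := hmin.1.
have [_ h1] := hS x p Xx Xp.
have [h2 _] := hS x c Xx Xc.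
have h3 := proj_vi hconv hp Xc.
have [h4 _] := hS c p Xc Xp.
have h5 := opt_vi hconv hmin (ltW L0) (fun y Xy => (hS c y Xc Xy).2) Xp.
move: h1 h2 h3 h4 h5; set g := grad f x; set gc := grad f c => h1 h2 h3 h4 h5.
have e : x - L^-1 *: g - p = (x - p) - L^-1 *: g.
  by apply/rowP => i; rewrite !mxE; ring.
rewrite e dotpBl dotpZl in h3.
have h3' : L * dotp (x - p) (c - p) <= dotp g (c - p).
  have : L * (dotp (x - p) (c - p) - L^-1 * dotp g (c - p)) <= 0.
    by rewrite pmulr_rle0.
  by rewrite mulrBr mulrA mulfV ?gt_eqF // mul1r subr_le0.
clear h3 e.
rewrite !enorm_sq in h1 h2 h4.
move: h1 h2 h3' h4 h5.
rewrite !(dotpDl, dotpDr, dotpNl, dotpNr, dotpBl, dotpBr).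
rewrite !(dotpC p x) !(dotpC c x) !(dotpC c p).
move=> h1 h2 h3 h4 h5.
lra.
Qed.


Lemma iter_contract (X : set vec) (f : vec -> R) mu L (x c : vec) :
  convex_subset X -> 0 < mu -> mu <= L ->
  (forall z, is_proj X z (Defs.proj X z)) ->
  (forall x y, X x -> X y ->
     mu / 2 * enorm (y - x) ^+ 2 <= f y - f x - dotp (grad f x) (y - x)
     /\ f y - f x - dotp (grad f x) (y - x) <= L / 2 * enorm (y - x) ^+ 2) ->
  is_min X f c -> X x -> forall k,
  X (iter k (pgd_step X L f) x) /\
  dotp (iter k (pgd_step X L f) x - c) (iter k (pgd_step X L f) x - c)
    <= ((L - mu) / (L + mu)) ^+ k * dotp (x - c) (x - c).
Proof.
move=> hconv mu0 muL hproj hS hmin Xx; elim=> [|k [Xk IH]].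
  by rewrite /= expr0 mul1r.
have Lm : 0 < L + mu by apply: addr_gt0 => //; apply: lt_le_trans muL.
have q0 : 0 <= (L - mu) / (L + mu) by rewrite divr_ge0 ?subr_ge0 // ltW.
rewrite iterS; set y := iter k _ x.
have hp := hproj (y - L^-1 *: grad f y).
split; first exact: hp.1.
have := pgd_contract hconv mu0 muL hS hmin Xk hp.
rewrite /pgd_step -/y => h.
have h' : dotp (Defs.proj X (y - L^-1 *: grad f y) - c) (Defs.proj X (y - L^-1 *: grad f y) - c)
    <= (L - mu) / (L + mu) * dotp (y - c) (y - c).
  by rewrite mulrAC ler_pdivlMr // mulrC.
apply: le_trans h' _; have := ler_wpM2l q0 IH; by rewrite mulrA -exprS.
Qed.

Lemma qK_bound mu L : 0 < mu -> mu <= L ->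
  ((L - mu) / (L + mu)) ^+ `|Num.ceil ((L + mu) / (2 * mu) * ln 4)|%N <= 4^-1 :> R.
Proof.
move=> mu0 muL.
have Lm : 0 < L + mu by apply: addr_gt0 => //; apply: lt_le_trans muL.
set c := (L + mu) / (2 * mu) * ln 4.
set K := `|Num.ceil c|%N.
have ln4 : 0 < ln (4 : R) by apply: ln_gt0; lra.
have c0 : 0 <= c by rewrite /c mulr_ge0 ?divr_ge0 ?mulr_ge0 // ltW.
have KR : c <= K%:R.
  rewrite /K natr_absz ger0_norm; first exact: ceil_ge.
  by rewrite ceil_ge0; lra.
set a := 2 * mu / (L + mu).
have qa : (L - mu) / (L + mu) = 1 - a.
  by rewrite /a; field; rewrite gt_eqF.
have a1 : a <= 1 by rewrite /a ler_pdivrMr // mul1r; lra.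
have q0 : 0 <= 1 - a by lra.
rewrite qa.
apply: (@le_trans _ _ (expR (- a) ^+ K)).
  rewrite lerXn2r // ?nnegrE ?expR_ge0 //.
  by have := expR_ge1Dx (- a); lra.
rewrite -expRM_natl.
have -> : (4 : R)^-1 = expR (- ln 4) by rewrite expRN lnK // posrE.
rewrite ler_expR.
have ca : c * a = ln 4.
  by rewrite /c /a; field; rewrite ?gt_eqF.
have a0 : 0 <= a by rewrite /a divr_ge0 ?mulr_ge0 // ltW.
have : c * a <= K%:R * a by rewrite ler_wpM2r.
lra.
Qed.

End Opt.

Lemma omgdS (R : realType) (d : nat) (X : set 'rV[R]_d) L K f t : (1 <= t)%N ->
  omgd X L K f t.+1 = iter K (pgd_step X L (f t)) (omgd X L K f t).
Proof. by case: t. Qed.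

Lemma iter_in (R : realType) (d : nat) (X : set 'rV[R]_d) L g k y :
  (forall z, is_proj X z (Defs.proj X z)) -> X y -> X (iter k (pgd_step X L g) y).
Proof. by move=> hp Xy; elim: k => [//|k IH]; rewrite iterS; exact: (hp _).1. Qed.

Unset Implicit Arguments.

Theorem theorem2 (R : realType) (d T : nat) (X : set 'rV[R]_d)
    (mu L G : R) (f : nat -> 'rV[R]_d -> R) :
  (1 <= d)%N -> (1 <= T)%N ->
  X !=set0 -> closed X -> convex_subset X -> X 0 ->
  0 < mu -> mu <= L ->
  (forall t, (1 <= t <= T)%N -> forall x, X x -> 0 <= f t x) ->
  (forall t, (1 <= t <= T)%N -> forall x, X x -> differentiable (f t) x) ->
  (forall t, (1 <= t <= T)%N -> forall x y, X x -> X y ->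
     mu / 2 * enorm (y - x) ^+ 2 <= f t y - f t x - dotp (grad (f t) x) (y - x)
     /\ f t y - f t x - dotp (grad (f t) x) (y - x) <= L / 2 * enorm (y - x) ^+ 2) ->
  (forall t, (1 <= t <= T)%N ->
     (forall x, X x -> enorm (grad (f t) x) <= G) /\
     (exists2 x, X x & enorm (grad (f t) x) = G)) ->
  let K := `|Num.ceil ((L + mu) / (2 * mu) * ln 4)|%N in
  qs_cost f T (omgd X L K f) - C_OPT X f T <=
    2 * G * (enorm (argminX X (f 1%N)) + path_len X f T)
    + 5 * enorm (argminX X (f 1%N)) ^+ 2
    + (10 - mu / (2 * (mu + 4))) * path_len2 X f T.
Proof.
move=> d1 T1 X0 Xcl Xconv X00 mu0 muL fpos fdiff hS hG.
cbv zeta; set K := `|Num.ceil ((L + mu) / (2 * mu) * ln 4)|%N.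
have T1' : (1 <= 1 <= T)%N by rewrite T1.
have G0 : 0 <= G by have [_ [x0 _ <-]] := hG 1%N T1'; exact: enorm_ge0.
have hB : forall y, X y -> enorm y <= 2 * G / mu.
  move=> y Xy.
  have [h1 _] := hS 1%N T1' 0 y X00 Xy.
  have [h2 _] := hS 1%N T1' y 0 Xy X00.
  have [hg _] := hG 1%N T1'.
  have c1 := cs (grad (f 1%N) 0) (- y).
  have c2 := cs (grad (f 1%N) y) y.
  have g0 := hg 0 X00; have gy := hg y Xy.
  rewrite subr0 in h1; rewrite sub0r enormN dotpNr in h2.
  rewrite enormN dotpNr in c1.
  have n0 := enorm_ge0 y.
  have e1 : enorm (grad (f 1%N) 0) * enorm y <= G * enorm y by rewrite ler_wpM2r.
  have e2 : enorm (grad (f 1%N) y) * enorm y <= G * enorm y by rewrite ler_wpM2r.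
  have : mu * enorm y ^+ 2 <= 2 * G * enorm y by lra.
  move=> h; rewrite ler_pdivlMr //.
  have [ny0|ny0] := eqVneq (enorm y) 0.
    by rewrite ny0 mul0r mulr_ge0.
  have nyp : 0 < enorm y by rewrite lt0r ny0.
  by rewrite expr2 mulrA ler_pM2r // mulrC in h.
have cX : compact X := bounded_closed_compact (bounded_of hB) Xcl.
have hproj : forall z, is_proj X z (Defs.proj X z).
  move=> z; apply: xgetPex.
  have [c Xc hc] := @exists_min R d X (fun y => dotp (y - z) (y - z)) X0 cX
    (continuous_subspaceT (@dist2_cont _ _ z)).
  by exists c; split => // w Xw; apply: ler_wsqrtr; exact: hc.
have hmin : forall t, (1 <= t <= T)%N -> is_min X (f t) (argminX X (f t)).
  move=> t tT; apply: xgetPex.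
  have fc : {within X, continuous (f t)}.
    apply: continuous_in_subspaceT => y; rewrite in_setE => Xy.
    exact: differentiable_continuous (fdiff t tT y Xy).
  have [c Xc hc] := @exists_min R d X (f t) X0 cX fc.
  by exists c.
set x := omgd X L K f.
set xs := fun t => argminX X (f t).
have Xx : forall t, X (x t).
  elim=> [|t IH]; first exact: X00.
  case: t IH => [_|t IH]; first exact: X00.
  rewrite /x omgdS //; exact: iter_in hproj IH.
have hcon : forall t, (1 <= t < T)%N -> enorm (x t.+1 - xs t) <= 2^-1 * enorm (x t - xs t).
  move=> t /andP[t1 tT].
  have tT' : (1 <= t <= T)%N by rewrite t1 ltnW.
  have [_ h] := iter_contract Xconv mu0 muL hproj (hS t tT') (hmin t tT') (Xx t) K.
  have hq := qK_bound mu0 muL.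
  rewrite -/K in hq.
  have D0 := dotp_ge0 (x t - xs t).
  have ex : x t.+1 = iter K (pgd_step X L (f t)) (x t) by rewrite /x omgdS.
  have h' : dotp (x t.+1 - xs t) (x t.+1 - xs t) <= 4^-1 * dotp (x t - xs t) (x t - xs t).
    rewrite ex; apply: le_trans h _; exact: ler_wpM2r.
  rewrite -(ler_pXn2r (n:=2)) // ?nnegrE ?mulr_ge0 ?enorm_ge0 ?invr_ge0 //.
  rewrite exprMn !enorm_sq.
  have -> : (2^-1 : R) ^+ 2 = 4^-1 by rewrite expr2 -invfM; congr (_^-1); lra.
  exact: h'.
set e := fun t => enorm (x t - xs t).
set de := fun t : nat => enorm (xs t - xs t.-1).
have e0 : forall t, 0 <= e t by move=> t; exact: enorm_ge0.
have de0 : forall t, 0 <= de t by move=> t; exact: enorm_ge0.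
have hit : forall t, (1 <= t <= T)%N -> f t (x t) - f t (xs t) <= G * e t.
  move=> t tT.
  have [h _] := hS t tT _ _ (Xx t) (hmin t tT).1.
  have c1 := cs (grad (f t) (x t)) (x t - xs t).
  have [hg _] := hG t tT.
  have g1 := hg _ (Xx t).
  have : dotp (grad (f t) (x t)) (xs t - x t) = - dotp (grad (f t) (x t)) (x t - xs t).
    by rewrite -dotpNr opprB.
  move=> hh; rewrite hh in h.
  have : 0 <= mu / 2 * enorm (xs t - x t) ^+ 2 by rewrite mulr_ge0 ?divr_ge0 ?sqr_ge0 // ltW.
  have : enorm (grad (f t) (x t)) * e t <= G * e t by rewrite ler_wpM2r.
  rewrite /e; lra.
have sw : forall s, (1 <= s < T)%N ->
    2^-1 * enorm (x s.+1 - x s) ^+ 2 <= 9 / 8 * e s ^+ 2.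
  move=> s sT; have h := hcon s sT.
  have -> : x s.+1 - x s = (x s.+1 - xs s) + (xs s - x s).
    by apply/rowP => i; rewrite !mxE; ring.
  have h2 := enorm_tri (x s.+1 - xs s) (xs s - x s).
  rewrite (enormB (xs s) (x s)) in h2.
  have n0 := enorm_ge0 (x s.+1 - xs s + (xs s - x s)).
  have n1 := enorm_ge0 (x s.+1 - xs s).
  have := e0 s; rewrite /e => es.
  have h3 : enorm (x s.+1 - xs s + (xs s - x s)) <= 3 / 2 * enorm (x s - xs s) by lra.
  have h4 : enorm (x s.+1 - xs s + (xs s - x s)) ^+ 2 <= (3 / 2 * enorm (x s - xs s)) ^+ 2.
    by rewrite ler_pXn2r // ?nnegrE // mulr_ge0.
  rewrite exprMn in h4; lra.
have rec : forall s, (1 <= s < T)%N -> e s.+1 <= 2^-1 * e s + de s.+1.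
  move=> s sT; have h := hcon s sT.
  have h2 := enorm_tri (x s.+1 - xs s) (xs s - xs s.+1).
  have ee : x s.+1 - xs s + (xs s - xs s.+1) = x s.+1 - xs s.+1.
    by apply/rowP => i; rewrite !mxE; ring.
  rewrite ee in h2.
  rewrite (enormB (xs s) (xs s.+1)) in h2.
  rewrite /e /de /=; lra.
set Fa := fun t => f t (x t) - f t (xs t) + 2^-1 * enorm (x t - x t.-1) ^+ 2.
set Fd2 := fun t => de t ^+ 2.
have inv : forall n, (1 <= n <= T)%N ->
  \sum_(1 <= t < n.+1) Fa t + G * e n + 9/4 * e n ^+ 2
  <= 2 * G * (e 1%N + \sum_(2 <= t < n.+1) de t) + 9/4 * e 1%N ^+ 2
     + 9/2 * \sum_(2 <= t < n.+1) Fd2 t.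
  elim=> [//|n IH] nT.
  case: n IH nT => [_ _|n IH nT].
    rewrite big_nat1 !big_geq //.
    have z : enorm (x 1%N - x 0%N) = 0.
      by rewrite /x /= subrr /enorm dotp0l sqrtr0.
    have := hit 1%N T1'.
    rewrite /Fa /= z; lra.
  have nT' : (1 <= n.+1 <= T)%N by move: nT => /andP[_ h]; apply/andP; split => //; exact: ltnW.
  have nT2 : (1 <= n.+1 < T)%N by move: nT => /andP[_ h]; apply/andP; split.
  have IH' := IH nT'.
  rewrite (big_nat_recr n.+2 1 Fa) // (big_nat_recr n.+2 2 de) // (big_nat_recr n.+2 2 Fd2) //.
  have h1 := hit n.+2 nT.
  have h2 := sw n.+1 nT2.
  have h3 := rec n.+1 nT2.
  have h4 := e0 n.+1; have h5 := de0 n.+2; have h6 := e0 n.+2.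
  have h7 : G * e n.+2 <= G * (2^-1 * e n.+1 + de n.+2) by rewrite ler_wpM2l.
  have h8 : e n.+2 ^+ 2 <= (2^-1 * e n.+1 + de n.+2) ^+ 2.
    by rewrite ler_pXn2r // ?nnegrE // addr_ge0 // mulr_ge0.
  have h9 : (2^-1 * e n.+1 + de n.+2) ^+ 2 <= 2^-1 * e n.+1 ^+ 2 + 2 * de n.+2 ^+ 2.
    have := sqr_ge0 (2^-1 * e n.+1 - de n.+2); lra.
  move: IH' h1 h2; rewrite /Fa /Fd2 /= => IH' h1 h2.
  lra.
have lb : \sum_(1 <= t < T.+1) f t (xs t) <= C_OPT X f T.
  apply: lb_le_inf.
    exists (qs_cost f T (fun _ => 0)); exists (fun _ => 0); split => //.
  move=> c [y [y0 yX ->]]; rewrite /qs_cost; apply: ler_sum_nat => t tT.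
  have tT' : (1 <= t <= T)%N by rewrite -ltnS.
  have := (hmin t tT').2 _ (yX t tT').
  have := sqr_ge0 (enorm (y t - y t.-1)); lra.
have qA : qs_cost f T x - \sum_(1 <= t < T.+1) f t (xs t) = \sum_(1 <= t < T.+1) Fa t.
  by rewrite /qs_cost -sumrB; apply: eq_bigr => t _; rewrite /Fa; ring.
have TT : (1 <= T <= T)%N by rewrite T1 leqnn.
have := inv T TT.
have pl : path_len X f T = \sum_(2 <= t < T.+1) de t by [].
have pl2 : path_len2 X f T = \sum_(2 <= t < T.+1) Fd2 t by [].
have e1 : e 1%N = enorm (argminX X (f 1%N)) by rewrite /e /x /= sub0r enormN.
rewrite pl pl2 -e1.
have P2 : 0 <= \sum_(2 <= t < T.+1) Fd2 t by apply: sumr_ge0 => t _; exact: sqr_ge0.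
have r : mu / (2 * (mu + 4)) <= 2^-1.
  rewrite ler_pdivrMr; last by rewrite mulr_gt0 // addr_gt0.
  by rewrite mulrA mulVf // mul1r; lra.
have h1 : 0 <= (11/2 - mu / (2 * (mu + 4))) * \sum_(2 <= t < T.+1) Fd2 t.
  by rewrite mulr_ge0 //; lra.
have h2 := e0 T; have h3 : 0 <= G * e T by rewrite mulr_ge0.
have h4 := sqr_ge0 (e 1%N); have h5 := sqr_ge0 (e T).
move: qA; rewrite -/x => qA.
lra.
Qed.
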